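(* Let $X$ be a graph with signless Laplacian $Q=\sum_{\lambda}\lambda E_\lambda$ and let $A_{\mathcal L}=\sum_\theta\theta F_\theta$ be the adjacency matrix of its line graph (spectral decompositions with orthogonal projections). Let $\{a,b\},\{\alpha,\beta\}\in E(X)$. For every eigenvalue $\lambda\neq0$ of $Q$, $\lambda-2$ is an eigenvalue of $A_{\mathcal L}$, and for each fixed sign $\pm$, $$F_{\lambda-2}\mathbf f_{ab}=\pm F_{\lambda-2}\mathbf f_{\alpha\beta}\iff E_\lambda(\mathbf e_a+\mathbf e_b)=\pm E_\lambda(\mathbf e_\alpha+\mathbf e_\beta).$$
   Context: The line graph $\mathcal L(X)$ has vertex set $E(X)$ with edges adjacent iff they share an endpoint; $\mathbf f_{ab}$ is the standard basis vector of the vertex of $\mathcal L(X)$ corresponding to edge $\{a,b\}$. $Q=D+A$. *)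

(* Defs.v *)
From HB Require Import structures.
From mathcomp Require Import all_boot all_order all_algebra.
Set Implicit Arguments. Unset Strict Implicit. Unset Printing Implicit Defensive.
Import Order.TTheory GRing.Theory Num.Theory.
Local Open Scope ring_scope.

(* A simple graph X on vertex set 'I_n is given by a symmetric irreflexive
   relation adj. *)

Definition edges (n : nat) (adj : rel 'I_n) : {set {set 'I_n}} :=
  [set [set p.1; p.2] | p in [set p : 'I_n * 'I_n | adj p.1 p.2]].

(* Enumeration of the edges: vertex i of the line graph is edge_of i. *)
Definition edge_of (n : nat) (adj : rel 'I_n) (i : 'I_#|edges adj|)
  : {set 'I_n} := enum_val i.

Definition signless_lap (R : nzRingType) (n : nat) (adj : rel 'I_n)
  : 'M[R]_n :=
  \matrix_(i, j) ((if i == j then #|[set k | adj i k]| else 0)%:R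
                  + (adj i j)%:R).

Definition line_adj (R : nzRingType) (n : nat) (adj : rel 'I_n)
  : 'M[R]_#|edges adj| :=
  \matrix_(i, j) ((i != j) && (edge_of i :&: edge_of j != set0))%:R.

Definition is_eigenproj (R : fieldType) (m : nat) (A : 'M[R]_m) (a : R)
  (P : 'M[R]_m) : Prop :=
  P^T = P /\ P *m P = P /\ (P == eigenspace A a)%MS.

Definition basis_vec (R : nzRingType) (m : nat) (i : 'I_m) : 'cV[R]_m :=
  delta_mx i 0.

(* Main.v *)
Require Import Defs.
From HB Require Import structures.
From mathcomp Require Import all_boot all_order all_algebra.
Import Order.TTheory GRing.Theory Num.Theory.
Set Implicit Arguments. Unset Strict Implicit.
Local Open Scope ring_scope.

Lemma edge_ofP n (adj : rel 'I_n) (adj_irr : irreflexive adj) (e : 'I_#|edges adj|) :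
  exists x y, [/\ adj x y, x != y & edge_of e = [set x; y]].
Proof.
rewrite /edge_of; case/imsetP: (enum_valP e) => p; rewrite inE => hp ->.
exists p.1, p.2; split => //; apply/negP => /eqP h; by rewrite h adj_irr in hp.
Qed.

Lemma card_edge n (adj : rel 'I_n) (adj_irr : irreflexive adj) (e : 'I_#|edges adj|) :
  #|edge_of e| = 2%N.
Proof. by have [x [y [_ hxy ->]]] := edge_ofP adj_irr e; rewrite cards2 hxy. Qed.

Lemma sum_nat_in (R : nzRingType) (T : finType) (A : {set T}) :
  \sum_(v : T) ((v \in A)%:R : R) = #|A|%:R.
Proof.
rewrite -sum1_card natr_sum [in RHS]big_mkcond /=; apply eq_bigr => v _.
by case: (v \in A).
Qed.

Lemma inter_edges n (adj : rel 'I_n) (adj_irr : irreflexive adj) (e e' : 'I_#|edges adj|) :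
  #|edge_of e :&: edge_of e'| = if e == e' then 2%N else (edge_of e :&: edge_of e' != set0 : nat).
Proof.
case: eqP => [->|ne]; first by rewrite setIid card_edge.
have le1 : (#|edge_of e :&: edge_of e'| <= 1)%N.
  rewrite leqNgt; apply/negP => h2.
  have h1 : edge_of e :&: edge_of e' = edge_of e.
    by apply/eqP; rewrite eqEcard subsetIl card_edge.
  have h3 : edge_of e :&: edge_of e' = edge_of e'.
    by apply/eqP; rewrite eqEcard subsetIr card_edge.
  by apply: ne; apply: enum_val_inj; rewrite /edge_of in h1 h3; rewrite -h1 h3.
rewrite -cards_eq0; move: le1; by case: #|_| => [|[|]].
Qed.

Lemma count_edges n (adj : rel 'I_n) (P : pred {set 'I_n}) :
  #|[set e : 'I_#|edges adj| | P (edge_of e)]| = #|[set S in edges adj | P S]|.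
Proof.
rewrite -[LHS]sum1_card -[RHS]sum1_card.
rewrite [RHS](eq_bigl (fun S => (S \in edges adj) && P S)); last by move=> S; rewrite inE.
rewrite big_enum_val_cond /=; apply: eq_bigl => e; by rewrite inE.
Qed.

Definition inc (R : nzRingType) n (adj : rel 'I_n) : 'M[R]_(n, #|edges adj|) :=
  \matrix_(v, e) (v \in edge_of e)%:R.

Lemma NtN (R : nzRingType) n (adj : rel 'I_n) (adj_irr : irreflexive adj) :
  (inc R adj)^T *m inc R adj = line_adj R adj + 2%:M.
Proof.
apply/matrixP => e e'; rewrite !mxE.
rewrite (eq_bigr (fun v => (v \in edge_of e :&: edge_of e')%:R)); last first.
  by move=> v _; rewrite !mxE -natrM mulnb inE.
rewrite sum_nat_in inter_edges //.
case: eqP => [->|ne].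
  by rewrite /= add0r.
by rewrite /= addr0.
Qed.

Lemma NNt (R : nzRingType) n (adj : rel 'I_n) (adj_sym : symmetric adj)
  (adj_irr : irreflexive adj) :
  inc R adj *m (inc R adj)^T = signless_lap R adj.
Proof.
apply/matrixP => u v; rewrite !mxE.
rewrite (eq_bigr (fun e => (e \in [set e | (u \in edge_of e) && (v \in edge_of e)])%:R)); last first.
  by move=> e _; rewrite !mxE -natrM mulnb inE.
rewrite sum_nat_in (count_edges adj (fun S => (u \in S) && (v \in S))).
case: eqP => [<-|/eqP ne].
  rewrite adj_irr addr0; congr (_%:R).
  have -> : [set S in edges adj | (u \in S) && (u \in S)] =
            (fun k => [set u; k]) @: [set k | adj u k].
    apply/setP => S; rewrite !inE andbb; apply/andP/imsetP.
      case=> /imsetP [p]; rewrite inE => hp -> /set2P [] ->.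
        by exists p.2; rewrite ?inE.
      by exists p.1; rewrite ?inE 1?adj_sym // setUC.
    case=> k; rewrite inE => hk ->; split; last by rewrite set21.
    by apply/imsetP; exists (u, k); rewrite ?inE.
  apply: card_in_imset => k1 k2; rewrite !inE => h1 h2 e12.
  have : k1 \in [set u; k2] by rewrite -e12 set22.
  case/set2P => // hk; by rewrite hk adj_irr in h1.
rewrite add0r; congr (_%:R).
case: (boolP (adj u v)) => huv.
  suff -> : [set S in edges adj | (u \in S) && (v \in S)] = [set [set u; v]].
    by rewrite cards1.
  apply/setP => S; rewrite !inE.
  apply/andP/eqP.
    case=> /imsetP [[x y]]; rewrite inE /= => hp -> /andP [].
    move=> /set2P [] hu /set2P [] hv; subst; rewrite ?eqxx // in ne *.
    by rewrite setUC.
  move=> ->; split; last by rewrite set21 set22.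
  by apply/imsetP; exists (u, v); rewrite ?inE.
apply/eqP; rewrite cards_eq0; apply/eqP/setP => S; rewrite !inE.
apply/negP => /andP [/imsetP [[x y]]]; rewrite inE /= => hp -> /andP [].
move=> /set2P [] hu /set2P [] hv; subst.
- by rewrite eqxx in ne.
- by rewrite hp in huv.
- by rewrite adj_sym hp in huv.
- by rewrite eqxx in ne.
Qed.

Lemma eigproj_mul (R : fieldType) k p (A : 'M[R]_k) a (P : 'M_k)
  (hP : is_eigenproj A a P) (M : 'M_(p, k)) :
  (M <= eigenspace A a)%MS -> M *m P = M.
Proof.
move: hP => [_ [hPP hPe]]; rewrite -(eqmxP hPe) => /submxP [D ->].
by rewrite -mulmxA hPP.
Qed.

Lemma eigproj_A (R : fieldType) k (A : 'M[R]_k) a (P : 'M_k)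
  (hP : is_eigenproj A a P) : P *m A = a *: P.
Proof. move: hP => [_ [_ /andP [h _]]]; exact/eigenspaceP. Qed.

Lemma L_eq (R : nzRingType) n (adj : rel 'I_n) (adj_irr : irreflexive adj) :
  line_adj R adj = (inc R adj)^T *m inc R adj - 2%:M.
Proof. by rewrite NtN // addrK. Qed.

Lemma keyQ (R : comNzRingType) n (adj : rel 'I_n) (adj_sym : symmetric adj)
  (adj_irr : irreflexive adj) p (M : 'M[R]_(p, n)) lam :
  M *m signless_lap R adj = lam *: M ->
  (M *m inc R adj) *m line_adj R adj = (lam - 2) *: (M *m inc R adj).
Proof.
move=> hM; rewrite L_eq // mulmxBr mul_mx_scalar !mulmxA -(mulmxA M) NNt // hM.
by rewrite -scalemxAl scalerBl.
Qed.

Lemma keyL (R : comNzRingType) n (adj : rel 'I_n) (adj_sym : symmetric adj)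
  (adj_irr : irreflexive adj) p (M : 'M[R]_(p, #|edges adj|)) lam :
  M *m line_adj R adj = (lam - 2) *: M ->
  (M *m (inc R adj)^T) *m signless_lap R adj = lam *: (M *m (inc R adj)^T).
Proof.
move=> hM; rewrite -NNt // !mulmxA -(mulmxA M) NtN // mulmxDr hM mul_mx_scalar.
by rewrite -scalerDl subrK scalemxAl.
Qed.

Theorem mainTheorem12 (R : rcfType) (n : nat) (adj : rel 'I_n)
  (adj_sym : symmetric adj) (adj_irr : irreflexive adj)
  (a b al be : 'I_n) (hab : adj a b) (halbe : adj al be)
  (i j : 'I_#|edges adj|)
  (hi : edge_of i = [set a; b]) (hj : edge_of j = [set al; be])
  (lam : R) (hlam : eigenvalue (signless_lap R adj) lam) (hlam0 : lam != 0) :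
  eigenvalue (line_adj R adj) (lam - 2) /\
  forall (E : 'M[R]_n) (F : 'M[R]_#|edges adj|),
    is_eigenproj (signless_lap R adj) lam E ->
    is_eigenproj (line_adj R adj) (lam - 2) F ->
    forall s : bool,
      (F *m basis_vec R i = (-1) ^+ s *: (F *m basis_vec R j)) <->
      (E *m (basis_vec R a + basis_vec R b)
         = (-1) ^+ s *: (E *m (basis_vec R al + basis_vec R be))).
Proof.
set N := inc R adj.
split.
  case/eigenvalueP: hlam => x hx nx; apply/eigenvalueP; exists (x *m N).
    exact: keyQ.
  apply/negP => /eqP h0.
  have : x *m N *m N^T = lam *: x by rewrite -mulmxA NNt.
  rewrite h0 mul0mx => /esym/eqP; rewrite scalemx_eq0 (negbTE hlam0) (negbTE nx).
  by [].
move=> E F hE hF s.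
have hEt : E^T = E by case: hE.
have hFt : F^T = F by case: hF.
have ENF : E *m N *m F = E *m N.
  apply: (eigproj_mul hF); apply/eigenspaceP; apply: keyQ => //.
  exact: eigproj_A hE.
have FNE : F *m N^T *m E = F *m N^T.
  apply: (eigproj_mul hE); apply/eigenspaceP; apply: keyL => //.
  exact: eigproj_A hF.
have EN_NF : E *m N = N *m F.
  rewrite -ENF; have := congr1 trmx FNE; rewrite !trmx_mul trmxK hEt hFt.
  by rewrite mulmxA.
have NtE : N^T *m E = F *m N^T.
  by have := congr1 trmx EN_NF; rewrite !trmx_mul hEt hFt.
have FNN : F *m N^T *m N = lam *: F.
  rewrite -mulmxA NtN // mulmxDr (eigproj_A hF) mul_mx_scalar -scalerDl subrK.
  by [].
have Ncol : forall (k : 'I_#|edges adj|) (x y : 'I_n), adj x y ->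
    edge_of k = [set x; y] -> N *m basis_vec R k = basis_vec R x + basis_vec R y.
  move=> k x y hxy hk; rewrite /basis_vec -colE; apply/matrixP => v l.
  rewrite !mxE hk !inE ord1 eqxx !andbT.
  case: (eqVneq v x) => [->|nvx] /=.
    have -> : (x == y) = false by apply/negP => /eqP h; rewrite h adj_irr in hxy.
    by rewrite addr0.
  by rewrite add0r.
rewrite -(Ncol _ _ _ hab hi) -(Ncol _ _ _ halbe hj).
split => h.
  by rewrite !mulmxA EN_NF -!mulmxA h -scalemxAr.
have h2 : lam *: (F *m basis_vec R i) = ((-1) ^+ s) *: (lam *: (F *m basis_vec R j)).
  rewrite !scalemxAl -FNN -NtE -!mulmxA h -scalemxAr.
  rewrite -scalemxAl -!mulmxA. reflexivity.
move: h2; rewrite scalerA mulrC -scalerA => /(congr1 (fun w => lam^-1 *: w)).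
by rewrite !scalerA mulVf // !scale1r mulrA mulVf // mul1r.
Qed.
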